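(* Assume (A1) and (A2). For all $x,v,\tilde x,\tilde v\in\mathbb R^d$, \[|H(x,v)-H(\tilde x,\tilde v)|\le C_{dH,1}\,r(x,\tilde x,v,\tilde v)+C_{dH,2}\,r(x,\tilde x,v,\tilde v)\Big(\sqrt{H(x,v)}+\sqrt{H(\tilde x,\tilde v)}\Big),\] where $C_{dH,1}=\frac{24|\nabla U(0)|}\alpha$ and $C_{dH,2}=\frac{24L_U}{\alpha\sqrt\lambda}+\frac{6(1-\gamma)+\lambda-3}{\alpha\sqrt\lambda}+2\sqrt3\max\big(1,\frac1{2\alpha}\big)$.
   Context: $U\in\mathcal C^1(\mathbb R^d)$. (A1): $U\ge0$ and there exist $\lambda>0$, $A\ge0$ with $\tfrac12\nabla U(x)\cdot x\ge\lambda(U(x)+|x|^2/4)-A$ for all $x$. (A2): $\nabla U$ is $L_U$-Lipschitz, $L_U>0$. Set $\gamma=\frac{\lambda}{2(\lambda+1)}$, $H(x,v)=24U(x)+(6(1-\gamma)+\lambda)|x|^2+12x\cdot v+12|v|^2$, $\alpha=L_U+\frac\lambda4$, and $r(x,\tilde x,v,\tilde v)=\alpha|x-\tilde x|+|x-\tilde x+v-\tilde v|$. *)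

(* Defs.v *)
From HB Require Import structures.
From mathcomp Require Import all_boot all_order all_algebra.
From mathcomp Require Import all_classical all_reals all_analysis.
Set Implicit Arguments. Unset Strict Implicit. Unset Printing Implicit Defensive.
Import Order.TTheory GRing.Theory Num.Theory.
Import numFieldNormedType.Exports.
Local Open Scope ring_scope.

Section Defs.
Variables (R : realType) (d : nat).

Definition dotv (x y : 'rV[R]_d) : R := \sum_(i < d) x 0 i * y 0 i.
Definition enorm (x : 'rV[R]_d) : R := Num.sqrt (dotv x x).

Definition gam (lam : R) : R := lam / (2 * (lam + 1)).
Definition alph (LU lam : R) : R := LU + lam / 4.

Definition Hfun (U : 'rV[R]_d -> R) (lam : R) (x v : 'rV[R]_d) : R :=
  24 * U x + (6 * (1 - gam lam) + lam) * enorm x ^+ 2 + 12 * dotv x v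
  + 12 * enorm v ^+ 2.

Definition rdist (LU lam : R) (x xt v vt : 'rV[R]_d) : R :=
  alph LU lam * enorm (x - xt) + enorm (x - xt + (v - vt)).

Definition CdH1 (gU : 'rV[R]_d -> 'rV[R]_d) (LU lam : R) : R :=
  24 * enorm (gU 0) / alph LU lam.

Definition CdH2 (LU lam : R) : R :=
  24 * LU / (alph LU lam * Num.sqrt lam)
  + (6 * (1 - gam lam) + lam - 3) / (alph LU lam * Num.sqrt lam)
  + 2 * Num.sqrt 3 * Num.max 1 (1 / (2 * alph LU lam)).

End Defs.

(* Main.v *)
Require Import Defs.
From HB Require Import structures.
From mathcomp Require Import all_boot all_order all_algebra.
From mathcomp Require Import all_classical all_reals all_analysis.
From mathcomp Require Import ring lra.
Import Order.TTheory GRing.Theory Num.Theory.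
Import numFieldNormedType.Exports.
Local Open Scope classical_set_scope.
Local Open Scope ring_scope.

Set Implicit Arguments. Unset Strict Implicit.
Section Euc.
Variables (R : realType) (d : nat).
Implicit Types x y z : 'rV[R]_d.

Lemma dotvC x y : dotv x y = dotv y x.
Proof. by apply: eq_bigr => i _; rewrite mulrC. Qed.
Lemma dotvDl x y z : dotv (x + y) z = dotv x z + dotv y z.
Proof. by rewrite /dotv -big_split; apply: eq_bigr => i _; rewrite mxE mulrDl. Qed.
Lemma dotvBl x y z : dotv (x - y) z = dotv x z - dotv y z.
Proof. by rewrite /dotv -sumrB; apply: eq_bigr => i _; rewrite !mxE mulrBl. Qed.
Lemma dotvZl (c : R) x y : dotv (c *: x) y = c * dotv x y.
Proof. by rewrite /dotv mulr_sumr; apply: eq_bigr => i _; rewrite !mxE mulrA. Qed.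
Lemma dotvDr x y z : dotv z (x + y) = dotv z x + dotv z y.
Proof. by rewrite dotvC dotvDl !(dotvC z). Qed.
Lemma dotvBr x y z : dotv z (x - y) = dotv z x - dotv z y.
Proof. by rewrite dotvC dotvBl !(dotvC z). Qed.
Lemma dotvZr (c : R) x y : dotv y (c *: x) = c * dotv y x.
Proof. by rewrite dotvC dotvZl dotvC. Qed.
Lemma dotv_ge0 x : 0 <= dotv x x.
Proof. by apply: sumr_ge0 => i _; rewrite -expr2 sqr_ge0. Qed.

Lemma enorm_ge0 x : 0 <= enorm x.
Proof. exact: sqrtr_ge0. Qed.
Lemma enorm_sq x : enorm x ^+ 2 = dotv x x.
Proof. by rewrite /enorm sqr_sqrtr // dotv_ge0. Qed.

Lemma quad_lemma (A B C : R) : 0 <= B ->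
  (forall t, 0 <= A - 2 * t * C + t ^+ 2 * B) -> C ^+ 2 <= A * B.
Proof.
move=> hB h.
have [B0|Bpos] := eqVneq B 0.
  rewrite B0 mulr0.
  have [C0|Cn0] := eqVneq C 0; first by rewrite C0 expr0n.
  have := h ((A + 1) / (2 * C)).
  have -> : A - 2 * ((A + 1) / (2 * C)) * C + ((A + 1) / (2 * C)) ^+ 2 * B = -1.
    by rewrite B0; field; rewrite Cn0.
  move=> HH; exfalso; lra.
have hB' : 0 < B by rewrite lt_def Bpos hB.
have := h (C / B).
have -> : A - 2 * (C / B) * C + (C / B) ^+ 2 * B = (A * B - C ^+ 2) / B.
  by field.
by rewrite pmulr_lge0 ?invr_gt0 // subr_ge0.
Qed.

Lemma CS x y : `|dotv x y| <= enorm x * enorm y.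
Proof.
have h : dotv x y ^+ 2 <= dotv x x * dotv y y.
  apply: quad_lemma; first exact: dotv_ge0.
  move=> t; have := dotv_ge0 (x - t *: y).
  rewrite !(dotvBl, dotvBr, dotvZl, dotvZr) (dotvC y x).
  by move=> H; apply: (le_trans H); rewrite le_eqVlt; apply/orP; left; apply/eqP; ring.
have h2 : `|dotv x y| ^+ 2 <= (enorm x * enorm y) ^+ 2.
  by rewrite real_normK ?num_real // exprMn !enorm_sq.
have hP : 0 <= enorm x * enorm y by rewrite mulr_ge0 // enorm_ge0.
move: h2 hP (normr_ge0 (dotv x y)).
move: (enorm x * enorm y) `|dotv x y| => P N; nra.
Qed.

Lemma enormD x y : enorm (x + y) <= enorm x + enorm y.
Proof.
have h : enorm (x + y) ^+ 2 <= (enorm x + enorm y) ^+ 2.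
  rewrite enorm_sq !(dotvDl, dotvDr) sqrrD !enorm_sq (dotvC y x).
  have := CS x y; have := ler_norm (dotv x y); lra.
move: h (enorm_ge0 x) (enorm_ge0 y) (enorm_ge0 (x + y)).
move: (enorm x) (enorm y) (enorm (x + y)) => a b c; nra.
Qed.

Lemma enormZ (c : R) x : enorm (c *: x) = `|c| * enorm x.
Proof.
by rewrite /enorm dotvZl dotvZr mulrA -expr2 sqrtrM ?sqr_ge0 // sqrtr_sqr.
Qed.

Lemma enormN x : enorm (- x) = enorm x.
Proof. by rewrite -scaleN1r enormZ normrN normr1 mul1r. Qed.

Lemma enormB x y : enorm (x - y) <= enorm x + enorm y.
Proof. by rewrite -(enormN y) enormD. Qed.

Lemma enorm_rev x y : `|enorm x - enorm y| <= enorm (x - y).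
Proof.
have h1 : enorm x <= enorm (x - y) + enorm y.
  by rewrite -{1}(subrK y x) enormD.
have h2 : enorm y <= enorm (x - y) + enorm x.
  by rewrite -(enormN (x - y)) opprB -{1}(subrK x y) enormD.
rewrite ler_norml; apply/andP; split; lra.
Qed.

End Euc.
Lemma U_lip (R : realType) (d : nat) (U : 'rV[R]_d -> R)
  (gU : 'rV[R]_d -> 'rV[R]_d) (LU : R)  (hLU : 0 <= LU)
  (hdiff : forall x, differentiable U x)
  (hgrad : forall x v, 'D_v U x = dotv (gU x) v)
  (hA2 : forall x y, enorm (gU x - gU y) <= LU * enorm (x - y)) x xt :
  `|U x - U xt| <= (enorm (gU 0) + LU * (enorm x + enorm xt)) * enorm (x - xt).
Proof.
set D := x - xt.
pose g := fun t : R => U (t *: D + xt).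
have E t : (fun h : R => h^-1 *: ((g \o shift t) (h *: 1) - g t)) =
   (fun h : R => h^-1 *: ((U \o shift (t *: D + xt)) (h *: D) - U (t *: D + xt))).
  apply: funext => h /=; rewrite /g /shift /=.
  by rewrite [h%:A]mulr1 scalerDl addrA.
have dg (t : R) : is_derive t (1 : R) g (dotv (gU (t *: D + xt)) D).
  split; first by rewrite /derivable E; exact: diff_derivable.
  by rewrite /derive E; exact: hgrad.
have cg : {within `[0, 1], continuous g}.
  by apply: derivable_within_continuous => t _; exact: (@ex_derive _ _ _ _ _ _ _ (dg t)).
have [c hc Ec] := MVT_segment ler01 (fun t _ => dg t) cg.
move: hc; rewrite in_itv /= => /andP[c0 c1].
have g1 : g 1 = U x by rewrite /g scale1r /D subrK.
have g0 : g 0 = U xt by rewrite /g scale0r add0r.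
rewrite -g1 -g0 Ec subr0 mulr1.
set y := c *: D + xt.
have hcs := CS (gU y) D.
have hy : enorm y <= enorm x + enorm xt.
  have -> : y = c *: x + (1 - c) *: xt.
    by apply/matrixP => i j; rewrite !mxE; ring.
  apply: (le_trans (enormD _ _)); rewrite !enormZ.
  rewrite (ger0_norm c0) ger0_norm ?subr_ge0 //.
  have := enorm_ge0 x; have := enorm_ge0 xt; nra.
have hg : enorm (gU y) <= enorm (gU 0) + LU * (enorm x + enorm xt).
  have -> : gU y = (gU y - gU 0) + gU 0 by rewrite subrK.
  apply: (le_trans (enormD _ _)).
  have := hA2 y 0; rewrite subr0 => h.
  have : LU * enorm y <= LU * (enorm x + enorm xt).
    by apply: ler_wpM2l.
  lra.
apply: (le_trans hcs); apply: ler_wpM2r => //; exact: enorm_ge0.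
Qed.
Lemma final_real (R : realFieldType) (Ux Uxt a at' e f ww wt sH sHt sl s3 c g0 L al r M : R) :
  `|Ux - Uxt| <= (g0 + L * (a + at')) * e ->
  `|a - at'| <= e -> `|ww - wt| <= 2 * f + e ->
  0 <= a -> 0 <= at' -> 0 <= e -> 0 <= f -> 0 <= ww -> 0 <= wt -> 0 <= g0 ->
  0 <= L -> 0 < al -> 0 < sl -> 0 < s3 -> s3 ^+ 2 = 3 ->
  sl * a <= sH -> sl * at' <= sHt -> s3 * ww <= sH -> s3 * wt <= sHt ->
  0 <= c - 3 -> r = al * e + f -> 1 <= M -> 1 <= 2 * al * M ->
  `|24 * (Ux - Uxt) + (c - 3) * (a ^+ 2 - at' ^+ 2) + 3 * (ww ^+ 2 - wt ^+ 2)|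
  <= 24 * g0 / al * r + (24 * L / (al * sl) + (c - 3) / (al * sl) + 2 * s3 * M)
     * r * (sH + sHt).
Proof.
move=> hU ha hw a0 at0 e0 f0 ww0 wt0 g00 L0 al0 sl0 s30 s3sq hsa hsat hsw hswt hc hr hM1 hM2.
have alsl0 : 0 < al * sl by rewrite mulr_gt0.
have sH0 : 0 <= sH by apply: le_trans hsa; rewrite mulr_ge0 // ltW.
have sHt0 : 0 <= sHt by apply: le_trans hsat; rewrite mulr_ge0 // ltW.
have her : al * e <= r by rewrite hr; lra.
have K1 : (a + at') * e <= (sH + sHt) * r / (al * sl).
  rewrite ler_pdivlMr //.
  have -> : (a + at') * e * (al * sl) = (sl * a + sl * at') * (al * e) by ring.
  apply: ler_pM => //; first by rewrite addr_ge0 // mulr_ge0 // ltW.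
    by rewrite mulr_ge0 // ltW.
  lra.
have K2 : g0 * e <= g0 / al * r.
  have -> : g0 * e = g0 / al * (al * e) by field; rewrite !gt_eqF.
  by apply: ler_wpM2l => //; rewrite divr_ge0 // ltW.
have B1 : `|24 * (Ux - Uxt)| <= 24 * g0 / al * r + 24 * L / (al * sl) * r * (sH + sHt).
  rewrite normrM ger0_norm //.
  have KL : L * ((a + at') * e) <= L * ((sH + sHt) * r / (al * sl)) by apply: ler_wpM2l.
  have -> : 24 * L / (al * sl) * r * (sH + sHt) = 24 * (L * ((sH + sHt) * r / (al * sl))).
    by field; rewrite !gt_eqF.
  have -> : 24 * g0 / al * r = 24 * (g0 / al * r) by ring.
  have : (g0 + L * (a + at')) * e = g0 * e + L * ((a + at') * e) by ring.
  lra.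
have B2 : `|(c - 3) * (a ^+ 2 - at' ^+ 2)| <= (c - 3) / (al * sl) * r * (sH + sHt).
  have -> : (c - 3) * (a ^+ 2 - at' ^+ 2) = (c - 3) * ((a - at') * (a + at')) by ring.
  rewrite normrM (ger0_norm hc) normrM (ger0_norm (addr_ge0 a0 at0)).
  have -> : (c - 3) / (al * sl) * r * (sH + sHt) = (c - 3) * ((sH + sHt) * r / (al * sl)).
    by field; rewrite !gt_eqF.
  apply: ler_wpM2l => //; apply: le_trans K1.
  rewrite mulrC; apply: ler_wpM2l => //; lra.
have B3 : `|3 * (ww ^+ 2 - wt ^+ 2)| <= 2 * s3 * M * r * (sH + sHt).
  have -> : 3 * (ww ^+ 2 - wt ^+ 2) = s3 * ((ww - wt) * (s3 * ww + s3 * wt)).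
    by rewrite -[X in X * _ = _]s3sq; ring.
  have sw0 : 0 <= s3 * ww + s3 * wt by rewrite addr_ge0 // mulr_ge0 // ltW.
  rewrite normrM (ger0_norm (ltW s30)) normrM (ger0_norm sw0).
  have -> : 2 * s3 * M * r * (sH + sHt) = s3 * ((2 * M * r) * (sH + sHt)) by ring.
  apply: ler_wpM2l; first exact: ltW.
  apply: ler_pM; [exact: normr_ge0 | exact: sw0 | | lra].
    apply: (le_trans hw); rewrite hr.
    have : 2 * M * (al * e + f) = (2 * al * M) * e + 2 * M * f by ring.
    nra.
apply: (le_trans (ler_normD _ _)).
apply: le_trans (lerD (le_trans (ler_normD _ _) (lerD B1 B2)) B3) _.
rewrite le_eqVlt; apply/orP; left; apply/eqP; ring.
Qed.

Unset Implicit Arguments. Set Strict Implicit.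

Theorem lemma2p7 (R : realType) (d : nat) (U : 'rV[R]_d -> R)
  (gU : 'rV[R]_d -> 'rV[R]_d) (lam A LU : R)
  (* U is C^1 with gradient gU *)
  (hdiff : forall x, differentiable U x)
  (hgrad : forall x v, 'D_v U x = dotv (gU x) v)
  (hgcont : continuous gU)
  (* (A1) *)
  (hlam : 0 < lam) (hA : 0 <= A)
  (hU0 : forall x, 0 <= U x)
  (hA1 : forall x, dotv (gU x) x / 2 >= lam * (U x + enorm x ^+ 2 / 4) - A)
  (* (A2) *)
  (hLU : 0 < LU)
  (hA2 : forall x y, enorm (gU x - gU y) <= LU * enorm (x - y)) :
  forall x v xt vt : 'rV[R]_d,
    `| Hfun U lam x v - Hfun U lam xt vt |
    <= CdH1 gU LU lam * rdist LU lam x xt v vt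
       + CdH2 LU lam * rdist LU lam x xt v vt
         * (Num.sqrt (Hfun U lam x v) + Num.sqrt (Hfun U lam xt vt)).
Proof.
move=> x v xt vt.
have hg : lam / (2 * (lam + 1)) <= 1 / 2.
  rewrite ler_pdivrMr; last by rewrite mulr_gt0 //; lra.
  have -> : 1 / 2 * (2 * (lam + 1)) = lam + 1 by field.
  lra.
set c := 6 * (1 - gam lam) + lam.
have hc : lam <= c - 3 by rewrite /c /gam; lra.
have HE y w : Hfun U lam y w = 24 * U y + (c - 3) * enorm y ^+ 2 + 3 * enorm (y + 2 *: w) ^+ 2.
  rewrite /Hfun !enorm_sq !(dotvDl, dotvDr, dotvZl, dotvZr) (dotvC w y) -/c; ring.
have HL y w : lam * enorm y ^+ 2 <= Hfun U lam y w.
  rewrite HE; have := hU0 y; have := sqr_ge0 (enorm (y + 2 *: w)).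
  have : lam * enorm y ^+ 2 <= (c - 3) * enorm y ^+ 2 by apply: ler_wpM2r => //; exact: sqr_ge0.
  lra.
have HL3 y w : 3 * enorm (y + 2 *: w) ^+ 2 <= Hfun U lam y w.
  rewrite HE; have := hU0 y.
  have : 0 <= (c - 3) * enorm y ^+ 2 by rewrite mulr_ge0 ?sqr_ge0 //; lra.
  lra.
have SL y w : Num.sqrt lam * enorm y <= Num.sqrt (Hfun U lam y w).
  rewrite -(ger0_norm (enorm_ge0 y)) -sqrtr_sqr -sqrtrM; last exact: ltW.
  exact: ler_wsqrtr.
have S3 y w : Num.sqrt 3 * enorm (y + 2 *: w) <= Num.sqrt (Hfun U lam y w).
  rewrite -(ger0_norm (enorm_ge0 (y + 2 *: w))) -sqrtr_sqr -sqrtrM //.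
  exact: ler_wsqrtr.
have hw : `|enorm (x + 2 *: v) - enorm (xt + 2 *: vt)| <=
    2 * enorm (x - xt + (v - vt)) + enorm (x - xt).
  apply: (le_trans (enorm_rev _ _)).
  have -> : x + 2 *: v - (xt + 2 *: vt) = 2 *: (x - xt + (v - vt)) - (x - xt).
    by apply/matrixP => i j; rewrite !mxE; ring.
  apply: (le_trans (enormB _ _)); rewrite enormZ ger0_norm //.
have al0 : 0 < alph LU lam by rewrite /alph; lra.
have s30 : 0 < Num.sqrt 3 :> R by rewrite sqrtr_gt0.
have s3sq : Num.sqrt 3 ^+ 2 = 3 :> R by rewrite sqr_sqrtr.
have hM1 : 1 <= Num.max 1 (1 / (2 * alph LU lam)) by rewrite le_max lexx.
have hM2 : 1 <= 2 * alph LU lam * Num.max 1 (1 / (2 * alph LU lam)).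
  have h1 : 1 / (2 * alph LU lam) <= Num.max 1 (1 / (2 * alph LU lam)).
    by rewrite le_max lexx orbT.
  have h2 : 2 * alph LU lam * (1 / (2 * alph LU lam)) = 1 by field; rewrite gt_eqF.
  have h3 : 2 * alph LU lam * (1 / (2 * alph LU lam)) <=
      2 * alph LU lam * Num.max 1 (1 / (2 * alph LU lam)).
    by apply: ler_wpM2l => //; rewrite mulr_ge0 // ltW.
  by rewrite h2 in h3.
have -> : Hfun U lam x v - Hfun U lam xt vt =
  24 * (U x - U xt) + (c - 3) * (enorm x ^+ 2 - enorm xt ^+ 2)
  + 3 * (enorm (x + 2 *: v) ^+ 2 - enorm (xt + 2 *: vt) ^+ 2).
  by rewrite !HE; ring.
rewrite /CdH1 /CdH2 /rdist -/c.
apply: final_real.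
- exact: (U_lip (ltW hLU) hdiff hgrad hA2).
- exact: enorm_rev.
- exact: hw.
1-7: exact: enorm_ge0.
- exact: ltW.
- exact: al0.
- by rewrite sqrtr_gt0.
- exact: s30.
- exact: s3sq.
- exact: SL.
- exact: SL.
- exact: S3.
- exact: S3.
- lra.
- by [].
- exact: hM1.
- exact: hM2.
Qed.
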